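(* For $p=1$, the eigenvalues of the boundary-cell operator $M^{-1}(K^s-K^R+K^{SB})$ are $$\lambda_{\pm}(d)=3d-2\pm\sqrt{9d^2-12d-2},$$ while those of the interior-cell operator $M^{-1}(K^s-K^R)$ are $-2\pm\sqrt{2}\,i$. Moreover, for $d\in[-1,1]$, both $\lambda_+(d)$ and $\lambda_-(d)$ have strictly negative real part if and only if $d<2/3$.
   Context: Setting: the linear advection equation $\partial_t u+\partial_x u=s(x)$ (velocity $1$) with a Dirichlet condition $u=u_D$ at the left physical boundary $\bar x$. Uniform mesh of cells $\Omega_e=[x_{e-1/2},x_{e+1/2}]$, $e=1,\dots,N$, with $x_{1/2}=0$ and cell size $\Delta x=1$. On each cell the approximation space is $\mathbb{P}^p(\Omega_e)$ with basis $\{\phi^e_j\}_{j=0}^p$, where $\phi^e_j(x)=\phi_j(x-(e-1))$ are translates of a fixed basis $\{\phi_j\}$ of $\mathbb{P}^p$ on $[0,1]$. Local matrices (indices $i,j=0,\dots,p$, identical for all cells by translation): mass $M_{ij}=\int_{\Omega_e}\phi^e_i\phi^e_j\,dx$; stiffness $K^s_{ij}=\int_{\Omega_e}\partial_x\phi^e_i\,\phi^e_j\,dx$; right interface $K^R_{ij}=\phi^e_i(x_{e+1/2})\phi^e_j(x_{e+1/2})$. The physical boundary is at $\bar x = x_{1/2}+d$, with $d\in[-1,1]$ ($d<0$: outside the first cell, $d>0$: inside). Shifted boundary polynomial correction with homogeneous data $u_D=0$: the upwind flux at $x_{1/2}$ is $u^\star=-\bigl(u_h(x_{1/2}+d)-u_h(x_{1/2})\bigr)$,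 with $u_h$ the (polynomially extended) solution of cell 1, giving the matrix $K^{SB}_{ij}=-\phi^1_i(x_{1/2})\bigl(\phi^1_j(x_{1/2}+d)-\phi^1_j(x_{1/2})\bigr)$. The square root denotes any complex square root (the pair $\lambda_\pm$ is independent of the choice). *)

(* Defs.v *)
From HB Require Import structures.
From mathcomp Require Import all_boot all_order all_algebra.
From mathcomp Require Import complex.
Set Implicit Arguments. Unset Strict Implicit. Unset Printing Implicit Defensive.
Import Order.TTheory GRing.Theory Num.Theory.
Local Open Scope ring_scope.

Section DG.
Variable R : rcfType.

(* Exact integral over [0,1] of a polynomial q: \int_0^1 q = \sum_i q_i/(i+1). *)
Definition int01 (q : {poly R}) : R := \sum_(i < size q) q`_i / (i.+1)%:R.

Definition is_Pbasis (p : nat) (phi : 'I_p.+1 -> {poly R}) : Prop :=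
  (forall j, size (phi j) <= p.+1)%N /\
  (\matrix_(i < p.+1, k < p.+1) (phi i)`_k) \in unitmx.

(* Local matrices.  By translation invariance they are computed on the first
   cell Omega_1 = [x_{1/2}, x_{3/2}] = [0,1], where phi^1_j = phi_j. *)
Definition massM p (phi : 'I_p.+1 -> {poly R}) : 'M[R]_p.+1 :=
  \matrix_(i, j) int01 (phi i * phi j).
Definition stiffK p (phi : 'I_p.+1 -> {poly R}) : 'M[R]_p.+1 :=
  \matrix_(i, j) int01 ((phi i)^`() * phi j).
Definition rightK p (phi : 'I_p.+1 -> {poly R}) : 'M[R]_p.+1 :=
  \matrix_(i, j) ((phi i).[1] * (phi j).[1]).
(* Shifted-boundary correction, boundary at x_{1/2} + d = d. *)
Definition sbK p (phi : 'I_p.+1 -> {poly R}) (d : R) : 'M[R]_p.+1 :=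
  \matrix_(i, j) (- ((phi i).[0] * ((phi j).[d] - (phi j).[0]))).

Definition boundaryOp p (phi : 'I_p.+1 -> {poly R}) (d : R) : 'M[R]_p.+1 :=
  invmx (massM phi) *m (stiffK phi - rightK phi + sbK phi d).
Definition interiorOp p (phi : 'I_p.+1 -> {poly R}) : 'M[R]_p.+1 :=
  invmx (massM phi) *m (stiffK phi - rightK phi).

Definition ceig n (A : 'M[R]_n) (mu : R[i]) : bool :=
  eigenvalue (map_mx (fun x : R => x%:C%C) A) mu.

End DG.

(* Main.v *)
Require Import Defs.
From HB Require Import structures.
From mathcomp Require Import all_boot all_order all_algebra.
From mathcomp Require Import complex.
From mathcomp Require Import ring lra.
Import Order.TTheory GRing.Theory Num.Theory.
Local Open Scope ring_scope.

Lemma det2 (F : comNzRingType) (A : 'M[F]_2) :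
  \det A = A 0 0 * A 1 1 - A 0 1 * A 1 0.
Proof.
rewrite (expand_det_row _ ord0) !big_ord_recr big_ord0 /= add0r.
rewrite /cofactor !det_mx11 !mxE /=.
rewrite expr0 expr1 !mul1r mulN1r mulrN.
by congr (A _ _ * A _ _ - A _ _ * A _ _); apply/val_inj.
Qed.

Lemma eig_inv (F : fieldType) n (M B : 'M[F]_n) a : M \in unitmx ->
  eigenvalue (invmx M *m B) a = (\det (a *: M - B) == 0).
Proof.
move=> uM.
transitivity (\det (a%:M - invmx M *m B) == 0).
  apply/eigenvalueP/det0P=> [[v Av_av v_nz] | [v v_nz Av_av]]; exists v => //.
    by rewrite mulmxBr Av_av mul_mx_scalar subrr.
  by apply/eqP; rewrite -mul_mx_scalar eq_sym -subr_eq0 -mulmxBr Av_av.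
have -> : a%:M - invmx M *m B = invmx M *m (a *: M - B).
  by rewrite mulmxBr -scalemxAr mulVmx // scalemx1.
rewrite det_mulmx mulf_eq0 det_inv invr_eq0.
have : \det M != 0 by rewrite -unitfE -unitmxE.
by move/negbTE->.
Qed.
Section L.
Variable R : rcfType.

Lemma int01_wide (q : {poly R}) n : (size q <= n)%N ->
  int01 q = \sum_(i < n) q`_i / (i.+1)%:R.
Proof.
move=> h; rewrite /int01.
transitivity (\sum_(i < n | (i < size q)%N) q`_i / (i.+1)%:R).
  by rewrite (big_ord_widen _ (fun i => q`_i / (i.+1)%:R) h).
rewrite big_mkcond; apply: eq_bigr => i _; case: ifP => // /negbT.
by rewrite -leqNgt => hi; rewrite nth_default // mul0r.
Qed.

Lemma c2 {p : {poly R}} : (size p <= 2)%N -> p`_2 = 0.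
Proof. by move=> h; rewrite nth_default. Qed.

Lemma int01M (p q : {poly R}) : (size p <= 2)%N -> (size q <= 2)%N ->
  int01 (p * q) = p`_0 * q`_0 + (p`_0 * q`_1 + p`_1 * q`_0) / 2 + p`_1 * q`_1 / 3.
Proof.
move=> hp hq.
rewrite (@int01_wide _ 3); last first.
  apply: leq_trans (size_polyMleq _ _) _.
  by case: (size p) hp => [|[|[|]]] //; case: (size q) hq => [|[|[|]]].
rewrite !big_ord_recr big_ord0 /= !coefM !big_ord_recr !big_ord0 /= !subSS !subn0 (c2 hp) (c2 hq).
by field.
Qed.

Lemma int01D (p q : {poly R}) : (size p <= 2)%N -> (size q <= 2)%N ->
  int01 (p^`() * q) = p`_1 * q`_0 + p`_1 * q`_1 / 2.
Proof.
move=> hp hq.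
rewrite (@int01_wide _ 3); last first.
  have hd : (size p^`() <= 2)%N.
    case: (eqVneq p 0) => [->|nz]; first by rewrite deriv0 size_poly0.
    exact: leq_trans (ltnW (lt_size_deriv nz)) hp.
  apply: leq_trans (size_polyMleq _ _) _.
  by case: (size p^`()) hd => [|[|[|]]] //; case: (size q) hq => [|[|[|]]].
rewrite !big_ord_recr big_ord0 /= !coefM !big_ord_recr !big_ord0 /= !coef_deriv (c2 hp) (c2 hq).
rewrite !subSS !subn0 (nth_default 0 (leq_trans hp (isT : (2 <= 3)%N))).
by field.
Qed.

Lemma hornE (p : {poly R}) x : (size p <= 2)%N -> p.[x] = p`_0 + p`_1 * x.
Proof.
move=> hp; rewrite (horner_coef_wide _ hp) !big_ord_recr big_ord0 /=.
by rewrite expr0 expr1 mulr1 add0r.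
Qed.
End L.

Section M.
Variable R : rcfType.
Local Notation f := (fun x : R => x%:C%C).

Lemma detC (phi : 'I_2 -> {poly R}) : is_Pbasis phi ->
  (phi 0)`_0 * (phi 1)`_1 - (phi 0)`_1 * (phi 1)`_0 != 0.
Proof.
case=> _; rewrite unitmxE det2 unitfE !mxE //.
Qed.

Lemma boundary (phi : 'I_2 -> {poly R}) (d : R) (s : R[i]) (mu : R[i]) :
  is_Pbasis phi ->
  s ^+ 2 = (9 * d ^+ 2 - 12 * d - 2)%:C%C ->
  ceig (boundaryOp phi d) mu =
          ((mu == (3 * d - 2)%:C%C + s) || (mu == (3 * d - 2)%:C%C - s)).
Proof.
move=> hB hs; have hD := detC _ hB.
have [hsz _] := hB.
have h0 := hsz 0; have h1 := hsz 1.
move: hD hs.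
set a0 := (phi 0)`_0; set b0 := (phi 0)`_1; set a1 := (phi 1)`_0; set b1 := (phi 1)`_1.
move=> hD hs.
have uM : massM phi \in unitmx.
  rewrite unitmxE det2 unitfE !mxE !int01M // -/a0 -/a1 -/b0 -/b1.
  apply: contra hD => /eqP e; apply/eqP.
  have e2 : (a0*b1 - b0*a1)^+2 / 12%:R = 0 by rewrite -e; field.
  by move/eqP: e2; rewrite mulf_eq0 invr_eq0 pnatr_eq0 orbF expf_eq0 /= => /eqP.
rewrite /ceig /boundaryOp map_mxM map_invmx eig_inv ?map_unitmx //.
rewrite det2 !mxE !int01D // !int01M // !hornE // -/a0 -/a1 -/b0 -/b1.
set F := complex_real_complex_def__canonical__GRing_RMorphism R.
move: hD hs; rewrite -(fmorph_eq0 F).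
rewrite !(rmorphD, rmorphB, rmorphM, rmorphN, fmorphV, rmorph_nat, rmorph1, rmorph0, rmorphXn).
move: (F a0) (F b0) (F a1) (F b1) (F d) => A0 B0 A1 B1 D hD hs.
transitivity ((A0*B1-B0*A1)^+2 / 12%:R * ((mu - (3%:R*D-2%:R+s)) * (mu - (3%:R*D-2%:R - s))) == 0).
  congr (_ == 0).
  rewrite (_ : (mu - (3%:R*D-2%:R+s)) * (mu - (3%:R*D-2%:R - s)) = (mu - (3%:R*D-2%:R))^+2 - s^+2); last by ring.
  by rewrite hs; field.
rewrite !mulf_eq0 (negbTE hD) invr_eq0 pnatr_eq0 /= !subr_eq0.
done.
Qed.
End M.
Lemma part2 (R : rcfType) (d : R) (s : R[i]) :
  s ^+ 2 = (9 * d ^+ 2 - 12 * d - 2)%:C%C ->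
     ((complex.Re ((3 * d - 2)%:C%C + s) < 0) /\ (complex.Re ((3 * d - 2)%:C%C - s) < 0)
      <-> d < 2 / 3).
Proof.
case: s => x y; rewrite expr2 /= => -[e1 e2].
have hxy : x * y = 0 by lra.
split.
  move=> [h1 h2]; lra.
move=> hd.
have hc : 3 * d - 2 < 0 by lra.
have hx : x ^+ 2 < (3 * d - 2) ^+ 2.
  move: hxy => /eqP; rewrite mulf_eq0 => /orP[/eqP-> | /eqP hy].
    by rewrite expr0n /=; nra.
  rewrite hy in e1; nra.
split; nra.
Qed.
Theorem mainTheorem3 (R : rcfType) :
  (forall phi : 'I_2 -> {poly R}, is_Pbasis phi ->
     (forall d : R, -1 <= d <= 1 ->
        forall s : R[i], s ^+ 2 = (9 * d ^+ 2 - 12 * d - 2)%:C%C ->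
        forall mu : R[i],
          ceig (boundaryOp phi d) mu =
          ((mu == (3 * d - 2)%:C%C + s) || (mu == (3 * d - 2)%:C%C - s)))
     /\
     (forall mu : R[i],
        ceig (interiorOp phi) mu =
        ((mu == (-2)%:C%C + (Num.sqrt 2)%:C%C * 'i%C) ||
         (mu == (-2)%:C%C - (Num.sqrt 2)%:C%C * 'i%C))))
  /\
  (forall d : R, -1 <= d <= 1 ->
     forall s : R[i], s ^+ 2 = (9 * d ^+ 2 - 12 * d - 2)%:C%C ->
     ((complex.Re ((3 * d - 2)%:C%C + s) < 0) /\ (complex.Re ((3 * d - 2)%:C%C - s) < 0)
      <-> d < 2 / 3)).
Proof.
split; last by move=> d _ s hs; exact: part2.
move=> phi hB; split.
  by move=> d _ s hs mu; exact: boundary.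
move=> mu.
have -> : interiorOp phi = boundaryOp phi 0.
  rewrite /interiorOp /boundaryOp; congr (_ *m _).
  rewrite (_ : sbK phi 0 = 0) ?addr0 //.
  by apply/matrixP => i j; rewrite !mxE subrr mulr0 oppr0.
rewrite (@boundary _ phi 0 ((Num.sqrt 2)%:C%C * 'i%C)) //.
  by rewrite mulr0 sub0r.
rewrite exprMn sqr_i -rmorphXn sqr_sqrtr ?ler0n //.
by rewrite expr0n /= !mulr0 subr0 sub0r rmorphN mulrN1.
Qed.
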